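(* Let $M$ be a pure motive over $\mathbf{Q}$, let $i\le 2n-1$ be integers, and let $V=H^i_B(M_{\mathbf{C}},\mathbf{Q})$ with its pure $\mathbf{Q}$-Hodge structure of weight $i$, Betti conjugation $c_B$, involution $F_\infty$ and Hodge filtration $F^\bullet$ on $V_{\mathbf{C}}=H^i_{\mathrm{dR}}(M)\otimes\mathbf{C}$. Let $S:V\times V\to (2\pi\sqrt{-1})^{-i}\mathbf{Q}$ be a nondegenerate $(-1)^i$-symmetric bilinear form whose complex-bilinear extension is invariant under $F_\infty$ and under the action of $\mathbf{C}^\times$ (acting on $V^{p,q}$ by $z\mapsto z^p\bar z^q$), and which restricts to a $\mathbf{Q}$-valued form on $H^i_{\mathrm{dR}}(M)$; put $Q=(2\pi\sqrt{-1})^iS$, a $\mathbf{Q}$-valued form on $V$. Define the bilinear form $(u,v):=Q(u,c_B v)$ on $H^i_B(M_{\mathbf{R}},\mathbf{R}(n-1))$. Then: (1) $(\cdot,\cdot)$ is $\mathbf{R}$-valued. (2) If $i$ is even, $(\cdot,\cdot)$ is symmetric and nondegenerate, and its restriction to the subspace $\tilde\pi_{n-1}(F^nH^i_{\mathrm{dR}}(M_{\mathbf{R}}))$ is nondegenerate; in particular it induces, by identifying $H^{i+1}_{\mathcal D}(M_{\mathbf{R}},\mathbf{R}(n))$ with the orthogonal complement of that subspace, a nondegenerate form on $H^{i+1}_{\mathcal D}(M_{\mathbf{R}},\mathbf{R}(n))$. (3) If $i=2n-2$ and $S$ arises from a polarization (i.e. moreover $\sqrt{-1}^{\,p-q}Q(u,c_Bu)>0$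 for all nonzero $u\in V^{p,q}$), then the induced form on $H^{i+1}_{\mathcal D}(M_{\mathbf{R}},\mathbf{R}(n))$ is symmetric and positive definite.
   Context: For a motive $M$ over $\mathbf{Q}$: $V_{\mathbf{C}}=H^i_B(M_{\mathbf{C}},\mathbf{Q})\otimes\mathbf{C}$ is identified with $H^i_{\mathrm{dR}}(M)\otimes\mathbf{C}$ by the comparison isomorphism; $c_B$ is complex conjugation on the coefficients of $V_{\mathbf{C}}$, $F_\infty$ is the $\mathbf{C}$-linear involution induced by complex conjugation on the points of $M$ over $\mathbf{C}$, and $c_{\mathrm{dR}}=F_\infty c_B$ is complex conjugation with respect to $H^i_{\mathrm{dR}}(M)$. For a subring $A\subset\mathbf{C}$ stable under conjugation, $\mathbf{R}(j)=(2\pi\sqrt{-1})^j\mathbf{R}$, and $H^i_B(M_{\mathbf{R}},A)$ denotes the subspace of $H^i_B(M_{\mathbf{C}},A)$ fixed by $F_\infty c_B$; thus $H^i_B(M_{\mathbf{R}},\mathbf{R}(n-1))=\{v\in V_{\mathbf{C}}: c_Bv=F_\infty v=(-1)^{n-1}v\}$. $F^nH^i_{\mathrm{dR}}(M_{\mathbf{R}})=F^nH^i_{\mathrm{dR}}(M)\otimes\mathbf{R}$ (the step of the Hodge filtration on real de Rham cohomology), viewed inside $H^i_B(M_{\mathbf{R}},\mathbf{C})$, and $\tilde\pi_{n-1}:F^nH^i_{\mathrm{dR}}(M_{\mathbf{R}})\to H^i_B(M_{\mathbf{R}},\mathbf{R}(n-1))$ is the projection along $\mathbf{C}=\mathbf{R}(n)\oplus\mathbf{R}(n-1)$,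 i.e. $x\mapsto \tfrac12(x+(-1)^{n-1}c_Bx)$; it is injective and its cokernel is the Deligne cohomology $H^{i+1}_{\mathcal D}(M_{\mathbf{R}},\mathbf{R}(n))$. *)

(* Defs.v *)
From HB Require Import structures.
From mathcomp Require Import all_boot all_order all_algebra.
From mathcomp Require Import complex.
From mathcomp Require Import reals trigo.
Set Implicit Arguments. Unset Strict Implicit. Unset Printing Implicit Defensive.
Import Order.TTheory GRing.Theory Num.Theory.
Local Open Scope ring_scope.
Local Open Scope complex_scope.

(* The complex numbers are C := R[i] for R : realType; V_C := 'rV[C]_d
   (row vectors; linear maps act on the right, v *m A). *)

Definition tpi (R : realType) : R[i] := (2 * pi)%:C * (Complex 0 1).

Definition RatC (R : rcfType) (x : R[i]) : Prop := exists q : rat, x = ratr q.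

(* c_B : complex conjugation of the coefficients *)
Definition conjv (R : rcfType) (m n : nat) (v : 'M[R[i]]_(m, n)) :
  'M[R[i]]_(m, n) := map_mx (fun x => x^*) v.

Definition bil (K : comNzRingType) (d : nat) (M : 'M[K]_d) (u v : 'rV[K]_d) : K :=
  (u *m M *m v^T) 0 0.

(* Hodge decomposition given by an adapted basis B (rows) and types:
   row k of B lies in V^{hp k, i - hp k}. *)
Definition Vpq (K : nzRingType) (d : nat) (hp : 'I_d -> int) (B : 'M[K]_d)
  (p : int) : 'M[K]_d :=
  \matrix_(k < d) (if hp k == p then row k B else 0).

Definition Fil (K : nzRingType) (d : nat) (hp : 'I_d -> int) (B : 'M[K]_d)
  (p : int) : 'M[K]_d :=
  \matrix_(k < d) (if (p <= hp k)%R then row k B else 0).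

Definition hact (R : rcfType) (d : nat) (i : int) (hp : 'I_d -> int)
  (B : 'M[R[i]]_d) (z : R[i]) : 'M[R[i]]_d :=
  invmx B *m diag_mx (\row_k (z ^ hp k * z^* ^ (i - hp k))) *m B.

Definition Rspan (R : rcfType) (d : nat) (P : 'rV[R[i]]_d -> Prop)
  (v : 'rV[R[i]]_d) : Prop :=
  exists (m : nat) (r : 'I_m -> R) (w : 'I_m -> 'rV[R[i]]_d),
    (forall k, P (w k)) /\ v = \sum_(k < m) (r k)%:C *: w k.

(* H^i_B(M_R, R(n-1)) = { v : c_B v = F_inf v = (-1)^(n-1) v } *)
Definition HBR (R : rcfType) (d : nat) (n : int) (Finf : 'M[R[i]]_d)
  (v : 'rV[R[i]]_d) : Prop :=
  conjv v = (-1) ^ (n - 1) *: v /\ v *m Finf = (-1) ^ (n - 1) *: v.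

(* H^i_dR(M) = Q-span of the rows of D *)
Definition VdR (R : rcfType) (d : nat) (D : 'M[R[i]]_d) (w : 'rV[R[i]]_d) : Prop :=
  exists y : 'rV[rat]_d, w = map_mx ratr y *m D.

(* F^n H^i_dR(M_R) = (F^n H^i_dR(M)) (x) R, inside V_C *)
Definition FdRR (R : rcfType) (d : nat) (hp : 'I_d -> int) (B D : 'M[R[i]]_d)
  (n : int) : 'rV[R[i]]_d -> Prop :=
  Rspan (fun w => (w <= Fil hp B n)%MS /\ VdR D w).

Definition pitilde (R : rcfType) (d : nat) (n : int) (x : 'rV[R[i]]_d) : 'rV[R[i]]_d :=
  2^-1 *: (x + (-1) ^ (n - 1) *: conjv x).

Definition Wsub (R : rcfType) (d : nat) (hp : 'I_d -> int) (B D : 'M[R[i]]_d)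
  (n : int) (v : 'rV[R[i]]_d) : Prop :=
  exists x, FdRR hp B D n x /\ v = pitilde n x.

Definition imC (R : rcfType) : R[i] := Complex 0 1.

(* Main.v *)
Require Import Defs.
From HB Require Import structures.
From mathcomp Require Import all_boot all_order all_algebra.
From mathcomp Require Import complex.
From mathcomp Require Import reals trigo.
From mathcomp Require Import ring lra zify.
Import Order.TTheory GRing.Theory Num.Theory.
Local Open Scope ring_scope.

Section Generic.
Variable R : realType.
Local Notation C := (R[i]).
Variable d : nat.
Implicit Types (u v w : 'rV[C]_d) (M : 'M[C]_d).

Lemma bilDl M u v w : bil M (u + v) w = bil M u w + bil M v w.
Proof. by rewrite /bil !mulmxDl mxE. Qed.
Lemma bilDr M u v w : bil M u (v + w) = bil M u v + bil M u w.
Proof. by rewrite /bil linearD /= mulmxDr mxE. Qed.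
Lemma bilZl M a u v : bil M (a *: u) v = a * bil M u v.
Proof. by rewrite /bil -!scalemxAl mxE. Qed.
Lemma bilZr M a u v : bil M u (a *: v) = a * bil M u v.
Proof. by rewrite /bil linearZ /= -scalemxAr mxE. Qed.
Lemma bil0l M v : bil M 0 v = 0.
Proof. by rewrite /bil !mul0mx mxE. Qed.
Lemma bil0r M u : bil M u 0 = 0.
Proof. by rewrite /bil trmx0 mulmx0 mxE. Qed.
Lemma bilNl M u v : bil M (- u) v = - bil M u v.
Proof. by rewrite -scaleN1r bilZl mulN1r. Qed.
Lemma bilNr M u v : bil M u (- v) = - bil M u v.
Proof. by rewrite -scaleN1r bilZr mulN1r. Qed.
Lemma bil_sumr M u (I : Type) (r : seq I) (P : pred I) (f : I -> 'rV[C]_d) :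
  bil M u (\sum_(k <- r | P k) f k) = \sum_(k <- r | P k) bil M u (f k).
Proof. by elim/big_rec2: _ => [|k x y _ <-]; rewrite ?bil0r ?bilDr. Qed.
Lemma bil_suml M v (I : Type) (r : seq I) (P : pred I) (f : I -> 'rV[C]_d) :
  bil M (\sum_(k <- r | P k) f k) v = \sum_(k <- r | P k) bil M (f k) v.
Proof. by elim/big_rec2: _ => [|k x y _ <-]; rewrite ?bil0l ?bilDl. Qed.

Lemma conjvD m n (A B : 'M[C]_(m, n)) : conjv (A + B) = conjv A + conjv B.
Proof. by rewrite /conjv map_mxD. Qed.
Lemma conjvN m n (A : 'M[C]_(m, n)) : conjv (- A) = - conjv A.
Proof. by rewrite /conjv map_mxN. Qed.
Lemma conjvZ m n a (A : 'M[C]_(m, n)) : conjv (a *: A) = conjc a *: conjv A.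
Proof. by rewrite /conjv map_mxZ. Qed.
Lemma conjvK m n (A : 'M[C]_(m, n)) : conjv (conjv A) = A.
Proof. by apply/matrixP => j k; rewrite !mxE conjcK. Qed.
Lemma conjvM m n p (A : 'M[C]_(m, n)) (B : 'M[C]_(n, p)) :
  conjv (A *m B) = conjv A *m conjv B.
Proof. by rewrite /conjv map_mxM. Qed.
Lemma conjv_ratr m n (A : 'M[rat]_(m, n)) :
  conjv (map_mx (@ratr C) A) = map_mx ratr A.
Proof. by apply/matrixP => j k; rewrite !mxE (fmorph_rat conjc). Qed.
Lemma conj_bil M u v : (bil M u v)^* = bil (conjv M) (conjv u) (conjv v).
Proof.
rewrite /bil /conjv map_trmx -!map_mxM.
by rewrite [in RHS]mxE.
Qed.
End Generic.

Lemma expo_eq (a b i : int) : a - (i - a) + (b - (i - b)) = 2 * (a + b - i).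
Proof. lia. Qed.

Lemma iHH (n i a b : int) : i <= 2 * n - 1 -> n <= a -> n <= b -> a + b != i.
Proof. move=> *; apply/eqP; lia. Qed.
Lemma iMH (n i a b : int) : ~~ (a <= i - n) -> n <= b -> a + b != i.
Proof. rewrite -ltNge => *; apply/eqP; lia. Qed.
Lemma iLlt (n i a b : int) : a <= i - n -> ~~ (n <= b) -> a + b != i.
Proof. rewrite -ltNge => *; apply/eqP; lia. Qed.
Lemma iML (n i a b : int) : ~~ (n <= a) -> b <= i - n -> a + b != i.
Proof. rewrite -ltNge => *; apply/eqP; lia. Qed.
Lemma iLL (n i a b : int) : i <= 2 * n - 1 -> a <= i - n -> b <= i - n -> a + b != i.
Proof. move=> *; apply/eqP; lia. Qed.
Lemma iHgt (n i a b : int) : n <= a -> ~~ (b <= i - n) -> a + b != i.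
Proof. rewrite -ltNge => *; apply/eqP; lia. Qed.
Lemma iHLdisj (n i a : int) : i <= 2 * n - 1 -> n <= a -> a <= i - n -> False.
Proof. move=> *; lia. Qed.
Lemma iHiLo (n i b : int) : n <= i - b -> b <= i - n.
Proof. move=> *; lia. Qed.
Lemma iLoHi (n i b : int) : b <= i - n -> n <= i - b.
Proof. move=> *; lia. Qed.
Lemma iMid22 (n i a : int) : i = 2 * n - 2 -> ~~ (n <= a) -> ~~ (a <= i - n) -> a = n - 1.
Proof. rewrite -!ltNge => *; lia. Qed.
Lemma iexp0 (n i : int) : i = 2 * n - 2 -> (n - 1) - (i - (n - 1)) = 0.
Proof. move=> *; lia. Qed.
Lemma ieven (n i : int) : i = 2 * n - 2 -> ~~ odd `|i|%N.
Proof.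
move=> ->; have -> : 2 * n - 2 = 2 * (n - 1) by lia.
by rewrite abszM oddM.
Qed.
Lemma sign_even (R : realType) (i : int) : ~~ odd `|i|%N -> (-1 : R[i]) ^ i = 1.
Proof.
case: i => k ok.
  have ok' : odd k = false by exact: negbTE ok.
  by change ((-1 : R[i]) ^+ k = 1); rewrite -signr_odd ok' expr0.
have ok' : odd k.+1 = false by exact: negbTE ok.
by change (((-1 : R[i]) ^+ k.+1)^-1 = 1); rewrite -signr_odd ok' expr0 invr1.
Qed.
Arguments iHH {n i a b}.
Arguments iMH {n i a b}.
Arguments iLlt {n i a b}.
Arguments iML {n i a b}.
Arguments iLL {n i a b}.
Arguments iHgt {n i a b}.
Arguments iHLdisj {n i a}.
Arguments iHiLo {n i b}.
Arguments iLoHi {n i b}.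
Arguments iMid22 {n i a}.
Arguments iexp0 {n i}.
Arguments ieven {n i}.
Lemma rearr1 (K : comNzRingType) (a b c : K) : c = a + b + c - a - b.
Proof. by ring. Qed.
Lemma rearr2 (K : comNzRingType) (a b c : K) : a = a + b + c - b - c.
Proof. by ring. Qed.

Section Main.
Variable R : realType.
Local Notation C := (R[i]).
Variables (d : nat) (i n : int) (F : 'M[rat]_d) (B D Sm : 'M[C]_d) (hp : 'I_d -> int).
Hypothesis Hin : (i <= 2 * n - 1)%R.
Hypothesis HFF : F *m F = 1%:M.
Hypothesis HBu : B \in unitmx.
Hypothesis HVF : forall p : int, (Vpq hp B p *m map_mx ratr F :=: Vpq hp B (i - p))%MS.
Hypothesis HDc : forall k : 'I_d, conjv (row k D) *m map_mx ratr F = row k D.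
Hypothesis HFil : forall p : int, exists X : 'M[rat]_d, (Fil hp B p :=: map_mx ratr X *m D)%MS.
Hypothesis HSrat : forall j k : 'I_d, RatC (tpi R ^ i * Sm j k).
Hypothesis HSnd : forall u : 'rV[rat]_d,
      (forall v : 'rV[rat]_d, bil Sm (map_mx ratr u) (map_mx ratr v) = 0) -> u = 0.
Hypothesis HSsym : forall u v : 'rV[R[i]]_d, bil Sm v u = (-1) ^ i * bil Sm u v.
Hypothesis HSF : forall u v : 'rV[R[i]]_d,
      bil Sm (u *m map_mx ratr F) (v *m map_mx ratr F) = bil Sm u v.
Hypothesis HSz : forall z : R[i], z != 0 -> forall u v : 'rV[R[i]]_d,
      bil Sm (u *m hact i hp B z) (v *m hact i hp B z) = (z * z^*) ^ i * bil Sm u v.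

Let Fm : 'M[C]_d := map_mx ratr F.
Let Qm := tpi R ^ i *: Sm.
Let eps : C := (-1) ^ (n - 1).
Let bq (u v : 'rV[C]_d) := bil Qm u v.
Let P (x : 'rV[C]_d) := 2^-1 *: (x + eps *: (x *m Fm)).
Let coord (u : 'rV[C]_d) k := (u *m invmx B) 0 k.
Let supp (S : pred int) (u : 'rV[C]_d) := forall k, ~~ S (hp k) -> coord u k = 0.

Lemma bqDl u v w : bq (u + v) w = bq u w + bq v w. Proof. exact: bilDl. Qed.
Lemma bqDr u v w : bq u (v + w) = bq u v + bq u w. Proof. exact: bilDr. Qed.
Lemma bqZl a u v : bq (a *: u) v = a * bq u v. Proof. exact: bilZl. Qed.
Lemma bqZr a u v : bq u (a *: v) = a * bq u v. Proof. exact: bilZr. Qed.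
Lemma bqNl u v : bq (- u) v = - bq u v. Proof. exact: bilNl. Qed.
Lemma bqNr u v : bq u (- v) = - bq u v. Proof. exact: bilNr. Qed.
Lemma bq0l v : bq 0 v = 0. Proof. exact: bil0l. Qed.
Lemma bq0r u : bq u 0 = 0. Proof. exact: bil0r. Qed.
Lemma bq_sumr u (I : Type) (r : seq I) (Pr : pred I) (f : I -> 'rV[C]_d) :
  bq u (\sum_(k <- r | Pr k) f k) = \sum_(k <- r | Pr k) bq u (f k).
Proof. exact: bil_sumr. Qed.
Lemma bq_suml v (I : Type) (r : seq I) (Pr : pred I) (f : I -> 'rV[C]_d) :
  bq (\sum_(k <- r | Pr k) f k) v = \sum_(k <- r | Pr k) bq (f k) v.
Proof. exact: bil_suml. Qed.

Lemma L_FF : Fm *m Fm = 1%:M.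
Proof. by rewrite /Fm -map_mxM HFF map_mx1. Qed.

Lemma sign2 (z : int) : (-1 : C) ^ z * (-1) ^ z = 1.
Proof.
case: z => k /=.
  by rewrite -exprMn mulrNN mulr1 expr1n.
by rewrite -invfM -exprMn mulrNN mulr1 expr1n invr1.
Qed.

Lemma L_eps2 : eps * eps = 1.
Proof. exact: sign2. Qed.

Lemma L_epsn0 : eps != 0.
Proof. by apply/eqP => e0; move: L_eps2; rewrite e0 mul0r => /eqP; rewrite eq_sym oner_eq0. Qed.

Lemma L_epsc : conjc eps = eps.
Proof.
rewrite /eps; case: (n - 1) => k /=.
  by rewrite rmorphXn rmorphN1.
by rewrite fmorphV rmorphXn rmorphN1.
Qed.

Lemma two_n0 : (2 : C) != 0.
Proof. by rewrite pnatr_eq0. Qed.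

Lemma half2 (x : C) : 2^-1 * (x + x) = x.
Proof. by field. Qed.

Lemma halfv (x : 'rV[C]_d) : 2^-1 *: (x + x) = x.
Proof. by rewrite -[x]scale1r -scalerDl scalerA half2 scale1r. Qed.

Lemma conj_half : conjc (2^-1 : C) = 2^-1.
Proof. by rewrite fmorphV rmorph_nat. Qed.

Lemma tpi_n0 : tpi R ^ i != 0.
Proof.
rewrite expfz_eq0 negb_and orbC; apply/orP; left.
rewrite /tpi mulf_eq0 negb_or; apply/andP; split.
  rewrite -(rmorph0 (@real_complex R)) (inj_eq (@complexI R)) mulf_eq0 negb_or.
  by rewrite pnatr_eq0 /= gt_eqF // pi_gt0.
by rewrite eq_complex /= negb_and oner_eq0 orbT.
Qed.

Lemma L_Q0 : exists Q0 : 'M[rat]_d, Qm = map_mx ratr Q0.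
Proof.
have H : forall j k, exists q : rat, tpi R ^ i * Sm j k == ratr q.
  by move=> j k; case: (HSrat j k) => q e; exists q; rewrite e.
exists (\matrix_(j, k) xchoose (H j k)).
by apply/matrixP => j k; rewrite !mxE; apply/eqP; exact: (xchooseP (H j k)).
Qed.

Lemma L_Qc : conjv Qm = Qm.
Proof. by case: L_Q0 => Q0 ->; rewrite conjv_ratr. Qed.

Lemma L_bqS u v : bq u v = tpi R ^ i * bil Sm u v.
Proof. by rewrite /bq /bil /Qm -scalemxAr -scalemxAl mxE. Qed.

Lemma L_Qunit (u : 'rV[C]_d) : u *m Qm = 0 -> u = 0.
Proof.
case: L_Q0 => Q0 eQ.
have Q0u : Q0 \in unitmx.
  rewrite -row_free_unit -kermx_eq0; apply/eqP/row_matrixP => j; rewrite row0.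
  apply: HSnd => v.
  have : bq (map_mx ratr (row j (kermx Q0))) (map_mx ratr v) = 0.
    rewrite /bq /bil eQ map_trmx -!map_mxM -row_mul mulmx_ker row0 mul0mx.
    by rewrite map_mx0 mxE.
  by rewrite L_bqS => /eqP; rewrite mulf_eq0 (negbTE tpi_n0) /= => /eqP.
have Qu : Qm \in unitmx by rewrite eQ map_unitmx.
by move=> uQ; rewrite -[u](mulmxK Qu) uQ mul0mx.
Qed.

Lemma L_bq0 (u : 'rV[C]_d) : (forall w, bq u w = 0) -> u = 0.
Proof.
move=> H; apply: L_Qunit; apply/rowP => j.
have := H (delta_mx 0 j); rewrite /bq /bil trmx_delta -colE => E.
by move: E; rewrite !mxE.
Qed.

Lemma L_bqF u v : bq (u *m Fm) (v *m Fm) = bq u v.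
Proof. by rewrite (L_bqS u v) (L_bqS (u *m Fm) (v *m Fm)) HSF. Qed.

Lemma L_bqFr u v : bq u (v *m Fm) = bq (u *m Fm) v.
Proof. by have := L_bqF (u *m Fm) v; rewrite -mulmxA L_FF mulmx1. Qed.

Lemma L_bqsym u v : bq v u = (-1) ^ i * bq u v.
Proof. by rewrite (L_bqS v u) (L_bqS u v) HSsym; apply: mulrCA. Qed.

Lemma L_conjbq u v : (bq u v)^* = bq (conjv u) (conjv v).
Proof. by rewrite /bq (@conj_bil _ _ Qm u v) L_Qc. Qed.

Lemma L_eF u w : u *m Fm = eps *: u -> bq u (w *m Fm) = eps * bq u w.
Proof. by move=> E; rewrite L_bqFr E bqZl. Qed.

Lemma L_eFl u w : w *m Fm = eps *: w -> bq (u *m Fm) w = eps * bq u w.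
Proof. by move=> E; rewrite -L_bqFr E bqZr. Qed.

Lemma L_eP u w : u *m Fm = eps *: u -> bq u (P w) = bq u w.
Proof.
move=> E; rewrite /P bqZr bqDr bqZr (L_eF u w E) (mulrA eps eps) L_eps2 mul1r.
exact: half2.
Qed.

Lemma L_ePl u w : w *m Fm = eps *: w -> bq (P u) w = bq u w.
Proof.
move=> E; rewrite /P bqZl bqDl bqZl (L_eFl u w E) (mulrA eps eps) L_eps2 mul1r.
exact: half2.
Qed.

Lemma L_PF x : P x *m Fm = eps *: P x.
Proof.
rewrite /P -scalemxAl mulmxDl -scalemxAl -mulmxA L_FF mulmx1.
rewrite scalerA mulrC -scalerA; congr (_ *: _).
by rewrite scalerDr scalerA L_eps2 scale1r addrC.
Qed.


Lemma L_coordB l k : coord (row l B) k = (l == k)%:R.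
Proof. by rewrite /coord -row_mul mulmxV // !mxE. Qed.

Lemma L_decomp u : u = \sum_k coord u k *: row k B.
Proof. by rewrite -[LHS](mulmxKV HBu) mulmx_sum_row. Qed.

Lemma L_coordD u v k : coord (u + v) k = coord u k + coord v k.
Proof. by rewrite /coord mulmxDl mxE. Qed.
Lemma L_coordZ a u k : coord (a *: u) k = a * coord u k.
Proof. by rewrite /coord -scalemxAl mxE. Qed.
Lemma L_coord0 k : coord 0 k = 0.
Proof. by rewrite /coord mul0mx mxE. Qed.
Lemma L_coord_sum (I : Type) (r : seq I) (Pr : pred I) (f : I -> 'rV[C]_d) k :
  coord (\sum_(j <- r | Pr j) f j) k = \sum_(j <- r | Pr j) coord (f j) k.
Proof. by elim/big_rec2: _ => [|j x y _ <-]; rewrite ?L_coord0 ?L_coordD. Qed.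

Lemma L_hact k z : row k B *m hact i hp B z = (z ^ hp k * conjc z ^ (i - hp k)) *: row k B.
Proof.
rewrite /hact -row_mul !mulmxA mulmxV // mul1mx mul_diag_mx.
by apply/rowP => j; rewrite !mxE.
Qed.

Lemma exz (N : nat) : (0 < N)%N -> exists z : C, [/\ z != 0, z * z^* = 1 & z ^+ N != 1].
Proof.
move=> N0; set z := (N.*2).-root (-1 : C).
have hz : z ^+ N.*2 = -1 by rewrite rootCK // double_gt0.
have z0 : z != 0.
  apply/eqP => z0; move: hz; rewrite z0 expr0n double_eq0 (negbTE (lt0n_neq0 N0)) /=.
  by move/eqP; rewrite eq_sym oppr_eq0 oner_eq0.
have nz : `|z| = 1.
  apply/eqP; rewrite -(@pexpr_eq1 _ _ N.*2) ?double_gt0 //.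
  by rewrite -normrX hz normrN1.
exists z; split => //.
  by rewrite -normCK nz expr1n.
apply/eqP => h; move: hz; rewrite -addnn exprD h mul1r => /eqP.
by rewrite -addr_eq0 -mulr2n pnatr_eq0.
Qed.

Lemma exz' (e : int) : e != 0 -> exists z : C, [/\ z != 0, z * z^* = 1 & z ^ e != 1].
Proof.
case: e => m /= e0.
  have m0 : (0 < m)%N by case: m e0.
  have [z [z0 zz zm]] := @exz m m0.

  by exists z; split.
have [z [z0 zz zm]] := @exz m.+1 isT.
by exists z; split => //; rewrite invr_eq1.
Qed.

Lemma hodge0 k l : hp k + hp l != i -> bq (row k B) (row l B) = 0.
Proof.
move=> kl; rewrite L_bqS.
suff -> : bil Sm (row k B) (row l B) = 0 by rewrite mulr0.
have e0 : 2 * (hp k + hp l - i) != 0 by rewrite mulf_eq0 negb_or subr_eq0 kl.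
have [z [z0 zz ze]] := @exz' _ e0.
have cz : conjc z = z^-1.
  by apply: (mulfI z0); rewrite mulfV //; exact: zz.
have := HSz z z0 (row k B) (row l B).
rewrite !L_hact bilZl bilZr zz exp1rz mulrA.
have -> : z ^ hp k * conjc z ^ (i - hp k) * (z ^ hp l * conjc z ^ (i - hp l))
    = z ^ (2 * (hp k + hp l - i)).
  rewrite cz !exprz_inv -!expfzDr //.
  by rewrite expo_eq.
move/eqP; rewrite -subr_eq0 -mulrBl mulf_eq0 subr_eq0 (negbTE ze) /=.
by move/eqP.
Qed.

Lemma L_orth (S1 S2 : pred int) u v : supp S1 u -> supp S2 v ->
  (forall a b, S1 a -> S2 b -> a + b != i) -> bq u v = 0.
Proof.
move=> Hu Hv H; rewrite (L_decomp u) (L_decomp v) bq_suml; apply: big1 => k _.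
rewrite bq_sumr; apply: big1 => l _; rewrite bqZl bqZr.
case S1k: (S1 (hp k)); last by rewrite Hu ?S1k // mul0r.
case S2l: (S2 (hp l)); last by rewrite Hv ?S2l // mul0r mulr0.
by rewrite hodge0 ?mulr0 // H.
Qed.

Lemma L_suppD S u v : supp S u -> supp S v -> supp S (u + v).
Proof. by move=> Hu Hv k Sk; rewrite L_coordD Hu ?Hv ?addr0. Qed.
Lemma L_suppZ S a u : supp S u -> supp S (a *: u).
Proof. by move=> Hu k Sk; rewrite L_coordZ Hu ?mulr0. Qed.
Lemma L_supp0 S : supp S 0.
Proof. by move=> k _; rewrite L_coord0. Qed.
Lemma L_supp_sum S (I : Type) (r : seq I) (Pr : pred I) (f : I -> 'rV[C]_d) :
  (forall j, Pr j -> supp S (f j)) -> supp S (\sum_(j <- r | Pr j) f j).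
Proof.
move=> H; elim/big_rec: _ => [|j x Pj Hx]; first exact: L_supp0.
by apply: L_suppD => //; apply: H.
Qed.
Lemma L_supp_mono (S S' : pred int) u : supp S u -> (forall a, S a -> S' a) -> supp S' u.
Proof.
move=> Hu H k S'k; apply: Hu; apply/negP => Sk; by move/negP: S'k; apply; apply: H.
Qed.
Lemma L_suppB l : supp (pred1 (hp l)) (row l B).
Proof.
move=> k /= kl; rewrite L_coordB; case: eqP => // lk.
by move: kl; rewrite lk eqxx.
Qed.

Lemma L_suppV p u : (u <= Vpq hp B p)%MS -> supp (pred1 p) u.
Proof.
case/submxP => a ->; rewrite mulmx_sum_row; apply: L_supp_sum => k _.
apply: L_suppZ; rewrite rowK; case: eqP => [<-|_]; first exact: L_suppB.
exact: L_supp0.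
Qed.

Lemma L_suppFil p u : (u <= Fil hp B p)%MS -> supp (fun a => p <= a) u.
Proof.
case/submxP => a ->; rewrite mulmx_sum_row; apply: L_supp_sum => k _.
apply: L_suppZ; rewrite rowK; case: ifP => [pk|_]; last exact: L_supp0.
by apply: L_supp_mono (L_suppB k) _ => b /= /eqP ->.
Qed.

Lemma L_Filsupp p u : supp (fun a => p <= a) u -> (u <= Fil hp B p)%MS.
Proof.
move=> Hu; rewrite (L_decomp u); apply: summx_sub => k _.
case pk: (p <= hp k).
  by apply: scalemx_sub; have := row_sub k (Fil hp B p); rewrite rowK pk.
by rewrite Hu ?pk // scale0r sub0mx.
Qed.

Lemma L_Vpqsupp p u : supp (pred1 p) u -> (u <= Vpq hp B p)%MS.
Proof.
move=> Hu; rewrite (L_decomp u); apply: summx_sub => k _.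
case pk: (hp k == p).
  by apply: scalemx_sub; have := row_sub k (Vpq hp B p); rewrite rowK pk.
by rewrite Hu /= ?pk // scale0r sub0mx.
Qed.

Lemma L_rowVpq l : (row l B <= Vpq hp B (hp l))%MS.
Proof. by have := row_sub l (Vpq hp B (hp l)); rewrite rowK eqxx. Qed.

Lemma L_suppF (S : pred int) u : supp S u -> supp (fun b => S (i - b)) (u *m Fm).
Proof.
move=> Hu; rewrite (L_decomp u) mulmx_suml; apply: L_supp_sum => k _.
rewrite -scalemxAl; case Sk: (S (hp k)); last by rewrite Hu ?Sk // scale0r; apply: L_supp0.
apply: L_suppZ; apply: (@L_supp_mono (pred1 (i - hp k))).
  apply: L_suppV; have /eqmxP/andP[h1 _] := HVF (hp k).
  by apply: submx_trans h1; apply: submxMr; exact: L_rowVpq.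
by move=> a /= /eqP ->; rewrite opprB addrC subrK.
Qed.

Lemma L_Fpre l : exists f, supp (pred1 (i - hp l)) f /\ row l B = f *m Fm.
Proof.
have /eqmxP/andP[_ h2] := HVF (i - hp l).
have : (row l B <= Vpq hp B (i - hp l) *m Fm)%MS.
  by apply: submx_trans h2; rewrite opprB addrC subrK; exact: L_rowVpq.
case/submxP => a ->; exists (a *m Vpq hp B (i - hp l)); split; last by rewrite mulmxA.
by apply: L_suppV; exact: submxMl.
Qed.


Let hb (v : 'rV[C]_d) := conjv v = eps *: v /\ v *m Fm = eps *: v.
Let Hi := fun a : int => n <= a.
Let Lo := fun a : int => a <= i - n.
Let Mid := fun a : int => ~~ Hi a && ~~ Lo a.

Lemma L_cFm : conjv Fm = Fm.
Proof. exact: conjv_ratr. Qed.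

Lemma L_dR w : VdR D w -> conjv w = w *m Fm.
Proof.
case=> y ->.
have cD : conjv D *m Fm = D.
  apply/row_matrixP => k; rewrite row_mul -HDc; congr (_ *m _).
  by rewrite /conjv map_row.
by rewrite conjvM conjv_ratr -[in RHS]cD -!mulmxA L_FF mulmx1.
Qed.

Lemma conj_realC (r : R) : conjc (r%:C)%C = (r%:C)%C.
Proof. by rewrite /= oppr0. Qed.

Lemma L_FdRR x : FdRR hp B D n x -> (x <= Fil hp B n)%MS /\ conjv x = x *m Fm.
Proof.
case=> m [r [w [Hw ->]]]; split.
  by apply: summx_sub => k _; apply: scalemx_sub; case: (Hw k).
rewrite /conjv map_mx_sum mulmx_suml; apply: eq_bigr => k _.
rewrite map_mxZ -scalemxAl -/(conjv (w k)) L_dR; last by case: (Hw k).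
by congr (_ *: _); exact: conj_realC.
Qed.

Arguments L_orth [S1 S2 u v].
Arguments L_suppFil [p u].
Arguments L_suppF [S u].
Arguments L_supp_mono [S S' u].
Arguments L_FdRR [x].
Arguments L_suppV [p u].
Arguments L_Filsupp [p u].
Arguments L_Vpqsupp [p u].
Arguments L_dR [w].

Lemma L_W v : Wsub hp B D n v ->
  exists x, [/\ (x <= Fil hp B n)%MS, conjv x = x *m Fm & v = P x].
Proof.
case=> x [Hx ->]; have [h1 h2] := L_FdRR Hx; exists x; split; [exact: h1 | exact: h2 |].
by rewrite /pitilde h2.
Qed.

Lemma L_PFm x : P x *m Fm = 2^-1 *: (x *m Fm + eps *: x).
Proof. by rewrite /P -scalemxAl mulmxDl -scalemxAl -mulmxA L_FF mulmx1. Qed.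

Lemma L_Pc {x} : conjv x = x *m Fm -> hb (P x).
Proof.
move=> xc; split; last exact: L_PF.
rewrite -L_PF L_PFm /P conjvZ conjvD conjvZ conjvM L_cFm xc -mulmxA L_FF mulmx1.
by rewrite conj_half L_epsc.
Qed.

Lemma L_pairE u {v} : hb v -> bq u (conjv v) = eps * bq u v.
Proof. by case=> -> _; rewrite bqZr. Qed.

Lemma L_pairE' u {v} : hb v -> bq u v = eps * bq u (conjv v).
Proof. by move=> h; rewrite (L_pairE u h) (mulrA eps eps) L_eps2; symmetry; apply: mul1r. Qed.

Lemma L_span (X : 'M[rat]_d) (hX : (Fil hp B n :=: map_mx ratr X *m D)%MS) u :
  (forall k, bq u (row k (map_mx ratr X *m D)) = 0) ->
  forall f, (f <= Fil hp B n)%MS -> bq u f = 0.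
Proof.
move=> H f; have /eqmxP/andP[h1 _] := hX.
move=> /submx_trans/(_ h1)/submxP[a ->].
rewrite mulmx_sum_row bq_sumr; apply: big1 => k _; by rewrite bqZr H mulr0.
Qed.

Lemma L_Xk (X : 'M[rat]_d) (hX : (Fil hp B n :=: map_mx ratr X *m D)%MS) k :
  let x := row k (map_mx ratr X *m D) in
  [/\ (x <= Fil hp B n)%MS, conjv x = x *m Fm & Wsub hp B D n (P x)].
Proof.
move=> x; have /eqmxP/andP[_ h2] := hX.
have xF : (x <= Fil hp B n)%MS by apply: submx_trans h2; exact: row_sub.
have xd : VdR D x by exists (row k X); rewrite /x row_mul map_row.
have xc := L_dR xd.
split => //; exists x; split; last by rewrite /pitilde xc.
exists 1%N, (fun _ => 1), (fun _ => x); split => //.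
rewrite big_ord1; have -> : ((1 : R)%:C)%C = 1 by [].
by rewrite scale1r.
Qed.

Arguments L_span [X] hX u.
Arguments L_W [v].
Arguments L_Xk [X] hX k.

Let restr (S : pred int) (u : 'rV[C]_d) :=
  \sum_k (if S (hp k) then coord u k else 0) *: row k B.

Lemma L_coord_restr S u k : coord (restr S u) k = if S (hp k) then coord u k else 0.
Proof.
rewrite L_coord_sum (bigD1 k) //= L_coordZ L_coordB eqxx mulr1 big1 ?addr0 //.
by move=> l lk; rewrite L_coordZ L_coordB (negbTE lk) mulr0.
Qed.

Lemma L_supp_restr S u : supp S (restr S u).
Proof. by move=> k nS; rewrite L_coord_restr (negbTE nS). Qed.

Lemma L_restr_dec u : u = restr Hi u + restr Mid u + restr Lo u.
Proof.
rewrite {1}(L_decomp u) /restr -!big_split /=; apply: eq_bigr => k _.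
rewrite -!scalerDl; congr (_ *: _); rewrite /Mid.
case: (boolP (Hi (hp k))) => h; case: (boolP (Lo (hp k))) => l /=;
  rewrite ?addr0 ?add0r //.
by case: (iHLdisj Hin h l).
Qed.

Lemma supp_disj {S1 S2 : pred int} {u} : supp S1 u -> supp S2 u ->
  (forall a, S1 a -> S2 a -> False) -> u = 0.
Proof.
move=> H1 H2 H; rewrite (L_decomp u); apply: big1 => k _.
case S1k: (S1 (hp k)); last by rewrite H1 ?S1k // scale0r.
case S2k: (S2 (hp k)); last by rewrite H2 ?S2k // scale0r.
by case: (H _ S1k S2k).
Qed.

Lemma L_bqB u : (forall l, bq u (row l B) = 0) -> u = 0.
Proof.
move=> H; apply: L_bq0 => w.
rewrite (L_decomp w) bq_sumr; apply: big1 => l _; by rewrite bqZr H mulr0.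
Qed.

Lemma Z {u} : u *m Fm = eps *: u -> (forall f, (f <= Fil hp B n)%MS -> bq u f = 0) ->
  supp Mid u.
Proof.
move=> uF bf.
have bfs : forall f, supp Hi f -> bq u f = 0.
  by move=> f sf; apply: bf; apply: L_Filsupp.
have bfF : forall f, supp Hi f -> bq u (f *m Fm) = 0.
  by move=> f sf; rewrite (L_eF u f uF) bfs ?mulr0.
have eu := L_restr_dec u.
set f := restr Hi u; set m := restr Mid u; set g := restr Lo u.
move: eu; rewrite -/f -/m -/g => eu.
have sf : supp Hi f := L_supp_restr Hi u.
have sm : supp Mid m := L_supp_restr Mid u.
have sg : supp Lo g := L_supp_restr Lo u.
have bqe : forall w, bq g w = bq u w - bq f w - bq m w.
  by move=> w; rewrite eu !bqDl; apply: rearr1.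
have g0 : g = 0.
  apply: L_bqB => l; rewrite bqe.
  case: (boolP (Hi (hp l))) => hl.
    have sl : supp Hi (row l B).
      by apply: L_supp_mono (L_suppB l) _ => a /eqP ->.
    rewrite bfs // (L_orth sf sl) ?(L_orth sm sl) ?subrr ?subr0 //.
      by move=> a b /andP[_ la] hb'; exact: iMH la hb'.
    by move=> a b ha hb'; exact: iHH Hin ha hb'.
  rewrite -bqe; apply: (L_orth sg (L_suppB l)) => a b la /eqP ->.
  exact: iLlt la hl.
have bqf : forall w, bq f w = bq u w - bq m w - bq g w.
  by move=> w; rewrite eu !bqDl; apply: rearr2.
have f0 : f = 0.
  apply: L_bqB => l.
  case: (boolP (Lo (hp l))) => ll.
    rewrite bqf g0 bq0l subr0.
    have [f' [sf' ->]] := L_Fpre l.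
    have sf'' : supp Hi f'.
      by apply: L_supp_mono sf' _ => a /eqP ->; exact: iLoHi ll.
    rewrite bfF // (L_orth sm (L_suppF sf'')) ?subrr // => a b /andP[ha _] hb'.
    exact: iML ha (iHiLo hb').
  apply: (L_orth sf (L_suppB l)) => a b ha /eqP ->.
  exact: iHgt ha ll.
move: eu; rewrite f0 g0 add0r addr0 => ->; exact: sm.
Qed.


Let RPa (y : 'rV[C]_d) := 2^-1 *: (y + eps *: conjv y).
Let RPb (y : 'rV[C]_d) := 2^-1 *: (imC R *: (eps *: conjv y - y)).

Lemma imC2 : imC R * imC R = -1.
Proof. by apply/eqP; rewrite eq_complex /= ?(mul0r, mulr1, mul1r, mulr0, sub0r, add0r, addr0, oppr0, eqxx). Qed.

Lemma conj_imC : conjc (imC R) = - imC R.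
Proof. by apply/eqP; rewrite eq_complex /= oppr0 !eqxx. Qed.

Lemma L_cyF {y : 'rV[C]_d} : y *m Fm = eps *: y -> conjv y *m Fm = eps *: conjv y.
Proof. by move=> yF; rewrite -{1}L_cFm -conjvM yF conjvZ L_epsc. Qed.

Lemma RP1 {y : 'rV[C]_d} : y *m Fm = eps *: y ->
  [/\ hb (RPa y), hb (RPb y) & y = RPa y + imC R *: RPb y].
Proof.
move=> yF; have cyF := L_cyF yF.
have e1 : eps *: RPa y = 2^-1 *: (eps *: y + conjv y).
  rewrite /RPa scalerA (mulrC eps) -scalerA; congr (_ *: _).
  by rewrite scalerDr scalerA L_eps2 scale1r.
have e2 : eps *: RPb y = 2^-1 *: (imC R *: (conjv y - eps *: y)).
  rewrite /RPb scalerA (mulrC eps) -scalerA; congr (_ *: _).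
  rewrite scalerA (mulrC eps) -scalerA; congr (_ *: _).
  by rewrite scalerBr scalerA L_eps2 scale1r.
split.
- split.
    rewrite e1 /RPa conjvZ conjvD conjvZ conjvK conj_half L_epsc.
    by rewrite addrC.
  rewrite e1 /RPa -scalemxAl mulmxDl -scalemxAl yF cyF.
  by rewrite (scalerA eps eps) L_eps2 scale1r.
- split.
    rewrite e2 /RPb conjvZ conjvZ conjvD conjvN conjvZ conjvK conj_half L_epsc conj_imC.
    by rewrite scaleNr -scalerN opprB.
  rewrite e2 /RPb -scalemxAl -scalemxAl mulmxBl -scalemxAl yF cyF.
  by rewrite (scalerA eps eps) L_eps2 scale1r.
- rewrite /RPa /RPb (scalerA (imC R) (2^-1)) (mulrC (imC R)) -(scalerA (2^-1)).
  rewrite (scalerA (imC R) (imC R)) imC2 scaleN1r opprB.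
  rewrite -scalerDr addrACA subrr addr0.
  by rewrite halfv.
Qed.

Lemma RP2 (y : 'rV[C]_d) {w0 : 'rV[C]_d} : hb w0 -> bq y w0 = 0 ->
  bq (RPa y) (conjv w0) = 0 /\ bq (RPb y) (conjv w0) = 0.
Proof.
move=> hw H.
have cy : bq (conjv y) w0 = 0.
  by rewrite -[w0]conjvK -L_conjbq (L_pairE y hw) H mulr0 rmorph0.
rewrite !(L_pairE _ hw) /RPa /RPb.
rewrite !bqZl bqDl bqZl H cy bqDl bqNl bqZl cy H.
by rewrite !(mulr0, addr0, oppr0).
Qed.

Lemma C1 u v : hb u -> hb v -> bq u (conjv v) \is Num.real.
Proof.
move=> hu hv; apply/CrealP; rewrite (L_pairE u hv) rmorphM /= L_conjbq.
have ce : eps^* = eps := L_epsc.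
case: hu => -> _; rewrite bqZl (L_pairE u hv) ce.
by rewrite (mulrA eps eps) L_eps2 mul1r.
Qed.

Lemma C2sym u v : ~~ odd `|i|%N -> hb u -> hb v -> bq u (conjv v) = bq v (conjv u).
Proof.
move=> ev hu hv; rewrite (L_pairE u hv) (L_pairE v hu) (L_bqsym u v).
by rewrite sign_even // mul1r.
Qed.

Lemma C2hb u : hb u -> (forall v, hb v -> bq u (conjv v) = 0) -> u = 0.
Proof.
move=> hu H; apply: L_bq0 => w.
rewrite -(L_eP u w hu.2).
have [h1 h2 e] := RP1 (L_PF w).
rewrite e bqDr (bqZr (imC R)) (L_pairE' u h1) (L_pairE' u h2) !H //.
by rewrite !mulr0 addr0.
Qed.

Lemma L_Whb {v} : Wsub hp B D n v -> hb v.
Proof. by case/L_W => x [_ xc ->]; exact: L_Pc xc. Qed.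

Lemma ZW (X : 'M[rat]_d) (hX : (Fil hp B n :=: map_mx ratr X *m D)%MS) u :
  hb u -> (forall w, Wsub hp B D n w -> bq u (conjv w) = 0) -> supp Mid u.
Proof.
move=> hu H; apply: (Z hu.2); apply: (L_span hX u) => k.
have [_ k2 k3] := L_Xk hX k.
rewrite -(L_eP u _ hu.2) (L_pairE' u (L_Pc k2)) H //.
by rewrite mulr0.
Qed.

Arguments ZW [X] hX [u].

Lemma C2W (X : 'M[rat]_d) (hX : (Fil hp B n :=: map_mx ratr X *m D)%MS) u :
  Wsub hp B D n u -> (forall v, Wsub hp B D n v -> bq u (conjv v) = 0) -> u = 0.
Proof.
move=> Wu H.
have Zs := ZW hX (L_Whb Wu) H.
have [x [xF xc ex]] := L_W Wu.
have s2 : supp (fun a => Hi a || Lo a) u.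
  rewrite ex /P; apply: L_suppZ; apply: L_suppD.
    by apply: L_supp_mono (L_suppFil xF) _ => a h; rewrite /Hi h.
  apply: L_suppZ; apply: L_supp_mono (L_suppF (L_suppFil xF)) _ => a h.
  by apply/orP; right; exact: iHiLo h.
apply: (supp_disj Zs s2) => a /andP[/negbTE h1 /negbTE h2].
by rewrite h1 h2.
Qed.

Lemma C2Wp (X : 'M[rat]_d) (hX : (Fil hp B n :=: map_mx ratr X *m D)%MS) u :
  hb u -> (forall w, Wsub hp B D n w -> bq u (conjv w) = 0) ->
  (forall v, hb v /\ (forall w, Wsub hp B D n w -> bq v (conjv w) = 0) ->
     bq u (conjv v) = 0) -> u = 0.
Proof.
move=> hu H1 H2.
have sM := ZW hX hu H1.
apply: L_bqB => l.
case: (boolP (Hi (hp l))) => hl.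
  apply: (L_orth sM (L_suppB l)) => a b /andP[_ la] /eqP ->.
  exact: iMH la hl.
case: (boolP (Lo (hp l))) => ll.
  have [f [sf ->]] := L_Fpre l.
  rewrite (L_eF u f hu.2); apply/eqP; rewrite mulf_eq0; apply/orP; right; apply/eqP.
  apply: (L_orth sM sf) => a b /andP[_ la] /eqP ->.
  exact: iMH la (iLoHi ll).
rewrite -(L_eP u _ hu.2).
have [h1 h2 e] := RP1 (L_PF (row l B)).
have hw : forall w0, Wsub hp B D n w0 -> bq (P (row l B)) w0 = 0.
  move=> w0 Ww0; have [x [xF xc ->]] := L_W Ww0.
  rewrite (L_ePl _ _ (L_PF x)) /P bqZr bqDr bqZr.
  rewrite (L_orth (L_suppB l) (L_suppFil xF)); last first.
    by move=> a b /eqP -> hb'; exact: iMH ll hb'.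
  rewrite (L_orth (L_suppB l) (L_suppF (L_suppFil xF))); last first.
    by move=> a b /eqP -> hb'; exact: iML hl (iHiLo hb').
  by rewrite !(mulr0, addr0).
have Wp : forall y, (forall w0, Wsub hp B D n w0 -> bq (P (row l B)) w0 = 0) -> True by [].
rewrite e bqDr (bqZr (imC R)) (L_pairE' u h1) (L_pairE' u h2).
rewrite H2; last first.
  split => // w0 Ww0; exact: (RP2 _ (L_Whb Ww0) (hw _ Ww0)).1.
rewrite H2; last first.
  split => // w0 Ww0; exact: (RP2 _ (L_Whb Ww0) (hw _ Ww0)).2.
by rewrite !mulr0 addr0.
Qed.

Lemma C3pos (X : 'M[rat]_d) (hX : (Fil hp B n :=: map_mx ratr X *m D)%MS) u :
  i = 2 * n - 2 ->
  (forall (p : int) (u : 'rV[R[i]]_d), (u <= Vpq hp B p)%MS -> u != 0 ->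
      0 < imC R ^ (p - (i - p)) * bil Qm u (conjv u)) ->
  hb u -> (forall w, Wsub hp B D n w -> bq u (conjv w) = 0) -> u != 0 ->
  0 < bq u (conjv u).
Proof.
move=> i2 pol hu H u0.
have sM := ZW hX hu H.
have s1 : supp (pred1 (n - 1)) u.
  apply: L_supp_mono sM _ => a /andP[h1 h2] /=.
  by rewrite (iMid22 i2 h1 h2).
have := pol _ _ (L_Vpqsupp s1) u0.
by rewrite (iexp0 i2) expr0z mul1r.
Qed.


Lemma main_sec :
  let Qm := tpi R ^ i *: Sm in
  let pair := fun u v : 'rV[R[i]]_d => bil Qm u (conjv v) in
  let HB := HBR n (map_mx ratr F) in
  let W := Wsub hp B D n in
  let Wperp := fun u => HB u /\ (forall w, W w -> pair u w = 0) in
  (forall u v, HB u -> HB v -> pair u v \is Num.real) /\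
  (~~ odd (absz i) ->
     (forall u v, HB u -> HB v -> pair u v = pair v u) /\
     (forall u, HB u -> (forall v, HB v -> pair u v = 0) -> u = 0) /\
     (forall u, W u -> (forall v, W v -> pair u v = 0) -> u = 0) /\
     (forall u, Wperp u -> (forall v, Wperp v -> pair u v = 0) -> u = 0)) /\
  (i = 2 * n - 2 ->
   (forall (p : int) (u : 'rV[R[i]]_d), (u <= Vpq hp B p)%MS -> u != 0 ->
      0 < imC R ^ (p - (i - p)) * bil Qm u (conjv u)) ->
     (forall u v, Wperp u -> Wperp v -> pair u v = pair v u) /\
     (forall u, Wperp u -> u != 0 -> 0 < pair u u)).
Proof.
have [X hX] := HFil n.
move=> Qm' pair HB' W Wperp.
split; [|split].
- move=> u v hu hv; exact: (C1 u v hu hv).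
- move=> ev; split; [|split; [|split]].
  + move=> u v hu hv; exact: (C2sym u v ev hu hv).
  + move=> u hu H; exact: (C2hb u hu H).
  + move=> u Wu H; exact: (C2W X hX u Wu H).
  + move=> u [hu H1] H2; exact: (C2Wp X hX u hu H1 H2).
- move=> i2 pol; split.
  + move=> u v [hu _] [hv _]; exact: (C2sym u v (ieven i2) hu hv).
  + move=> u [hu H] u0; exact: (C3pos X hX u i2 pol hu H u0).
Qed.

End Main.

Theorem proposition2p3 (R : realType) (d : nat) (i n : int)
  (F : 'M[rat]_d) (B D Sm : 'M[R[i]]_d) (hp : 'I_d -> int) :
  (i <= 2 * n - 1)%R ->
  (* F_inf : a Q-linear involution of V = Q^d *)
  F *m F = 1%:M ->
  (* Hodge decomposition of V_C = C^d (adapted basis B, row k of type (hp k, i - hp k)) *)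
  B \in unitmx ->
  (forall p : int, (conjv (Vpq hp B p) :=: Vpq hp B (i - p))%MS) ->
  (forall p : int, (Vpq hp B p *m map_mx ratr F :=: Vpq hp B (i - p))%MS) ->
  (* de Rham structure: the Q-span of the rows of D, with V_dR (x) C = V_C,
     and c_dR = F_inf c_B fixing H_dR(M) *)
  D \in unitmx ->
  (forall k : 'I_d, conjv (row k D) *m map_mx ratr F = row k D) ->
  (* the Hodge filtration is defined over H_dR(M) *)
  (forall p : int, exists X : 'M[rat]_d, (Fil hp B p :=: map_mx ratr X *m D)%MS) ->
  (* S : V x V -> (2 pi i)^(-i) Q, given by its Gram matrix Sm *)
  (forall j k : 'I_d, RatC (tpi R ^ i * Sm j k)) ->
  (* nondegenerate on V *)
  (forall u : 'rV[rat]_d,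
      (forall v : 'rV[rat]_d, bil Sm (map_mx ratr u) (map_mx ratr v) = 0) -> u = 0) ->
  (* (-1)^i-symmetric *)
  (forall u v : 'rV[R[i]]_d, bil Sm v u = (-1) ^ i * bil Sm u v) ->
  (* F_inf-invariant *)
  (forall u v : 'rV[R[i]]_d,
      bil Sm (u *m map_mx ratr F) (v *m map_mx ratr F) = bil Sm u v) ->
  (* C^x-invariant (C^x acting on the target (2 pi i)^(-i) Q = Q(-i) by (z zbar)^i) *)
  (forall z : R[i], z != 0 -> forall u v : 'rV[R[i]]_d,
      bil Sm (u *m hact i hp B z) (v *m hact i hp B z) = (z * z^*) ^ i * bil Sm u v) ->
  (* Q-valued on H_dR(M) *)
  (forall u v : 'rV[R[i]]_d, VdR D u -> VdR D v -> RatC (bil Sm u v)) ->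
  let Qm := tpi R ^ i *: Sm in
  let pair := fun u v : 'rV[R[i]]_d => bil Qm u (conjv v) in
  let HB := HBR n (map_mx ratr F) in
  let W := Wsub hp B D n in
  let Wperp := fun u => HB u /\ (forall w, W w -> pair u w = 0) in
  (* (1) *)
  (forall u v, HB u -> HB v -> pair u v \is Num.real) /\
  (* (2) *)
  (~~ odd (absz i) ->
     (forall u v, HB u -> HB v -> pair u v = pair v u) /\
     (forall u, HB u -> (forall v, HB v -> pair u v = 0) -> u = 0) /\
     (forall u, W u -> (forall v, W v -> pair u v = 0) -> u = 0) /\
     (forall u, Wperp u -> (forall v, Wperp v -> pair u v = 0) -> u = 0)) /\
  (* (3) *)
  (i = 2 * n - 2 ->
   (forall (p : int) (u : 'rV[R[i]]_d), (u <= Vpq hp B p)%MS -> u != 0 ->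
      0 < imC R ^ (p - (i - p)) * bil Qm u (conjv u)) ->
     (forall u v, Wperp u -> Wperp v -> pair u v = pair v u) /\
     (forall u, Wperp u -> u != 0 -> 0 < pair u u)).
Proof.
move=> H1 H2 H3 H4 H5 H6 H7 H8 H9 H10 H11 H12 H13 H14.
eapply main_sec; eassumption.
Qed.
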